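(* Let $D$ and $r$ be positive integers and let $p:\mathbb N\to\mathbb C$ be a quasi-polynomial $p(n)=d_{r-1}(n)n^{r-1}+\cdots+d_1(n)n+d_0(n)$, where each $d_m:\mathbb N\to\mathbb C$ is periodic with period $D$ and $d_{r-1}$ is not identically zero. Write $\sum_{n\geq 0}p(n)z^n=L(z)/M(z)$ in lowest terms with partial fraction decomposition $$\frac{L(z)}{M(z)}=\sum_{M(\lambda)=0}\sum_{\ell=1}^{m(\lambda)}\frac{c_{\lambda,\ell}}{(\lambda-z)^{\ell}},$$ where $m(\lambda)$ is the multiplicity of $\lambda$ as a root of $M$. Let $\gamma$ be a root of $M$. Then for each $1\leq m\leq m(\gamma)$, $$ c_{\gamma,m} = \gamma^{m}(m-1)! \sum_{\ell=m}^{m(\gamma)}(-1)^{\ell-m}\left\{ {\ell \atop m}\right\}\frac{1}{D}\sum_{v=0}^{D-1} \gamma^{v}d_{\ell-1}(v).$$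
   Context: For such $p$ the generating function $\sum_{n\ge0}p(n)z^n$ is a rational function; in lowest terms $L/M$ one has $\deg L<\deg M$ and every root $\lambda$ of $M$ satisfies $\lambda^D=1$. $\left\{ {\ell \atop m}\right\}$ denotes the Stirling number of the second kind (the number of partitions of an $\ell$-element set into $m$ nonempty blocks). *)

(* Defs.v *)
From HB Require Import structures.
From mathcomp Require Import all_boot all_order all_algebra all_field.
Set Implicit Arguments. Unset Strict Implicit. Unset Printing Implicit Defensive.
Import Order.TTheory GRing.Theory Num.Theory.

Definition stirling2 (l m : nat) : nat :=
  #|[set P : {set {set 'I_l}} | partition P [set: 'I_l] & #|P| == m]|.

(* Main.v *)
Require Import Defs.
From HB Require Import structures.
From mathcomp Require Import all_boot all_order all_algebra all_field.
From mathcomp Require Import ring cyclic zify.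
Set Implicit Arguments. Unset Strict Implicit. Unset Printing Implicit Defensive.
Import Order.TTheory GRing.Theory Num.Theory.

Section Part.
Variable T : finType.

Definition Np (D : {set T}) m :=
  #|[set P : {set {set T}} | partition P D & #|P| == m]|.

Lemma coverU1 (A : {set T}) P : cover (A |: P) = A :|: cover P.
Proof.
apply/setP=> y; rewrite inE; apply/bigcupP/orP.
  by move=> [C /setU1P[->|CP] yC]; [left | right; apply/bigcupP; exists C].
move=> [yA|/bigcupP[C CP yC]]; first by exists A; rewrite ?setU11.
by exists C; rewrite // setU1r.
Qed.

Lemma sub_cover (P : {set {set T}}) C : C \in P -> C \subset cover P.
Proof. by move=> CP; apply/subsetP=> y yC; apply/bigcupP; exists C. Qed.

Lemma set1_neq0 (y : T) : [set y] != set0.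
Proof. by apply/eqP => /setP/(_ y); rewrite !inE eqxx. Qed.

Variables (D : {set T}) (x : T).
Hypothesis xD : x \in D.
Let D' := D :\ x.

Definition Fp (P : {set {set T}}) : {set {set T}} * {set T} :=
  let X := pblock P x in
  if X == [set x] then (P :\ X, set0) else ((X :\ x) |: (P :\ X), X :\ x).

Definition Gp (Po : {set {set T}} * {set T}) : {set {set T}} :=
  if Po.2 == set0 then [set x] |: Po.1 else (x |: Po.2) |: (Po.1 :\ Po.2).

Definition Yp m := [set Po : {set {set T}} * {set T} | partition Po.1 D' &&
  (if Po.2 == set0 then #|Po.1| == m else (Po.2 \in Po.1) && (#|Po.1| == m.+1))].

Lemma FpP P m : partition P D -> #|P| = m.+1 -> Fp P \in Yp m /\ Gp (Fp P) = P.
Proof.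
case/and3P=> /eqP covP tP P0 cardP.
have xc : x \in cover P by rewrite covP.
set X := pblock P x.
have XP : X \in P by apply: pblock_mem.
have xX : x \in X by rewrite mem_pblock.
have XD : X \subset D by rewrite -covP sub_cover.
have covD1 : cover (P :\ X) = D :\: X by rewrite coverD1 // covP.
rewrite /Fp -/X; case: ifP => [/eqP X1|Xn1].
  have XnP : X \notin P :\ X by rewrite !inE eqxx.
  split.
    rewrite inE /= eqxx; apply/andP; split.
      apply/and3P; split.
      - by rewrite covD1 X1.
      - exact: trivIsetD.
      - by rewrite !inE negb_and P0 orbT.
    by move: cardP; rewrite (cardsD1 X) XP add1n => -[->].
  by rewrite /Gp /= eqxx -X1 setD1K.
set B := X :\ x.
have B0 : B != set0.
  apply: contraFN Xn1 => /eqP B0; apply/eqP.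
  by rewrite -(setD1K xX) -/B B0 setU0.
have BnP : B \notin P :\ X.
  apply/negP => /setD1P[BX BP].
  have [//|[y yB]] := set_0Vmem B; first by move/eqP: B0.
  have yX : y \in X by move: yB; rewrite inE => /andP[].
  have := def_pblock tP BP yB; rewrite (def_pblock tP XP yX) => /esym eqBX.
  by move: BX; rewrite eqBX eqxx.
have disB : {in P :\ X, forall C : {set T}, [disjoint B & C]}.
  move=> C /setD1P[CX CP].
  have := trivIsetP tP X C XP CP; rewrite eq_sym CX => /(_ isT) dXC.
  by apply: disjointWl dXC; rewrite subD1set.
have P0' : set0 \notin P :\ X by rewrite !inE negb_and P0 orbT.
have [tP' _] := trivIsetU1 disB (trivIsetD _ tP) P0'.
split.
  rewrite inE /= (negbTE B0) setU11 /=; apply/andP; split.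
    apply/and3P; split => //.
      rewrite coverU1 covD1; apply/eqP/setP=> y; rewrite !inE.
      case: (y =P x) => [->|yx] /=; first by rewrite xX.
      by case yX: (y \in X) => //=; rewrite (subsetP XD).
    by rewrite in_setU1 negb_or eq_sym B0 P0'.
  by rewrite cardsU1 BnP -cardP (cardsD1 X P) XP.
by rewrite /Gp /= (negbTE B0) setD1K // setU1K // setD1K.
Qed.

Lemma GpP Po m : Po \in Yp m -> Gp Po \in [set P | partition P D & #|P| == m.+1]
  /\ Fp (Gp Po) = Po.
Proof.
case: Po => P' B; rewrite inE /= => /andP[/and3P[/eqP covP' tP' P0'] HB].
have xnc : forall C, C \in P' -> x \notin C.
  move=> C CP; apply/negP => xC.
  by have := subsetP (sub_cover CP) x xC; rewrite covP' !inE eqxx.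
rewrite /Gp /=; case: ifP HB => [/eqP -> /eqP cP|B0 /andP[BP /eqP cP]].
  have dis : {in P', forall C : {set T}, [disjoint [set x] & C]}.
    by move=> C CP; rewrite disjoints1 xnc.
  have [tP x1n] := trivIsetU1 dis tP' P0'.
  have pbx : pblock ([set x] |: P') x = [set x]
    by apply: def_pblock; rewrite ?setU11 ?set11.
  split.
    rewrite inE; apply/andP; split.
      apply/and3P; split => //.
        by rewrite coverU1 covP' setD1K.
      by rewrite !inE negb_or P0' andbT eq_sym set1_neq0.
    by rewrite cardsU1 x1n cP.
  by rewrite /Fp pbx eqxx setU1K.
have xB : x \notin B by apply: xnc.
have dis : {in P' :\ B, forall C : {set T}, [disjoint x |: B & C]}.
  move=> C /setD1P[CB CP]; have dBC : [disjoint B & C] by apply: (trivIsetP tP') => //; rewrite eq_sym.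
  rewrite -setI_eq0; apply/eqP/setP=> y; rewrite !inE.
  case: (y =P x) => [->|_] /=; first by rewrite (negbTE (xnc C CP)).
  by case yB: (y \in B) => //=; rewrite (disjointFr dBC yB).
have P0'' : set0 \notin P' :\ B by rewrite !inE negb_and P0' orbT.
have [tP xBn] := trivIsetU1 dis (trivIsetD _ tP') P0''.
have pbx : pblock ((x |: B) |: (P' :\ B)) x = x |: B.
  by apply: def_pblock; rewrite ?setU11.
have xB1 : (x |: B == [set x]) = false.
  apply/negbTE/negP => /eqP/setP eq1; move/negbT: B0; apply/negP/negPn/eqP/setP => y.
  have := eq1 y; rewrite !inE; case: (y =P x) => [->|_]; last by [].
  by rewrite (negbTE xB).
split.
  rewrite inE; apply/andP; split.
    apply/and3P; split => //.
      rewrite coverU1 coverD1 // covP'; apply/eqP/setP => y; rewrite !inE.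
      case: (y =P x) => [->|_]; rewrite ?xD //=.
      case yB: (y \in B) => //=.
      by have := subsetP (sub_cover BP) y yB; rewrite covP' !inE => /andP[].
    rewrite in_setU1 negb_or P0'' andbT; apply/negP => /eqP/setP/(_ x).
    by rewrite !inE eqxx.
  by rewrite cardsU1 xBn -cP (cardsD1 B P') BP.
by rewrite /Fp pbx xB1 (setU1K xB) (setU1K xBn) (setD1K BP).
Qed.

Lemma Np_rec m : Np D m.+1 = Np D' m + m.+1 * Np D' m.+1.
Proof.
rewrite /Np.
set A := [set P | partition P D & #|P| == m.+1].
have injF : {in A &, injective Fp}.
  move=> P1 P2; rewrite !inE => /andP[p1 /eqP c1] /andP[p2 /eqP c2] e.
  have [_ g1] := FpP p1 c1; have [_ g2] := FpP p2 c2.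
  by rewrite -g1 e g2.
rewrite -(card_in_imset injF).
have -> : Fp @: A = Yp m.
  apply/eqP; rewrite eqEsubset; apply/andP; split.
    apply/subsetP => _ /imsetP[P PA ->]; move: PA; rewrite inE => /andP[p /eqP c].
    by have [] := FpP p c.
  apply/subsetP => Po PoY; have [GA FG] := GpP PoY; apply/imsetP.
  by exists (Gp Po).
have -> : #|Yp m| = \sum_(P' : {set {set T}}) \sum_(B : {set T}) ((P', B) \in Yp m : nat).
  rewrite -sum1_card pair_big /= big_mkcond /=; apply: eq_bigr => -[P' B] _ /=.
  by case: ((P',B) \in Yp m).
rewrite (eq_bigr (fun P' => (partition P' D' && (#|P'| == m) : nat) +
   (partition P' D' && (#|P'| == m.+1)) * m.+1)); last first.
  move=> P' _; case pP: (partition P' D') => /=; last first.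
    by rewrite big1 // => B _; rewrite inE /= pP.
  rewrite (bigD1 set0) //= inE /= pP eqxx /=.
  have P0' : set0 \notin P' by case/and3P: pP.
  rewrite (eq_bigr (fun B => (B \in P') && (#|P'| == m.+1) : nat)); last first.
    by move=> B B0; rewrite inE /= pP (negbTE B0).
  have -> : \sum_(B | B != set0) ((B \in P') && (#|P'| == m.+1) : nat) =
            \sum_(B in P') ((#|P'| == m.+1) : nat).
    rewrite big_mkcond [RHS]big_mkcond /=; apply: eq_bigr => B _.
    by case: (B =P set0) => [->|]; rewrite /= ?(negbTE P0') //; case: (B \in P').
  rewrite sum_nat_const; congr (_ + _).
  by case: (#|P'| =P m.+1) => [->|] /=; rewrite ?muln1 ?mul1n ?muln0.
rewrite big_split /= -big_distrl /= [_ * m.+1]mulnC; congr (_ + _ * _).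
  rewrite -sum1_card [RHS]big_mkcond /=; apply: eq_bigr => P' _; rewrite inE.
  by case: (_ && _).
rewrite -sum1_card [RHS]big_mkcond /=; apply: eq_bigr => P' _; rewrite inE.
by case: (_ && _).
Qed.
End Part.

Fixpoint St (k m : nat) : nat :=
  match k, m with
  | 0, 0 => 1
  | 0, _.+1 => 0
  | _.+1, 0 => 0
  | k'.+1, m'.+1 => St k' m' + m'.+1 * St k' m'.+1
  end.

Lemma Np_St (T : finType) k (D : {set T}) m : #|D| = k -> Np D m = St k m.
Proof.
elim: k D m => [|k IH] D m.
  move/cards0_eq => ->; rewrite /Np.
  have PE : forall P : {set {set T}}, partition P set0 = (P == set0).
    move=> P; apply/idP/eqP => [/and3P[/eqP cP _ P0]|->].
      apply/eqP; rewrite -subset0; apply/subsetP => B BP.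
      have := sub_cover BP; rewrite cP subset0 => /eqP B0.
      by move: P0; rewrite -B0 BP.
    apply/and3P; split; rewrite ?inE //.
      by rewrite /cover big_set0.
    by rewrite /trivIset /cover !big_set0 cards0.
  case: m => [|m] /=.
    have -> : [set P : {set {set T}} | partition P set0 & #|P| == 0] = [set set0].
      by apply/setP => P; rewrite !inE PE cards_eq0 andbb.
    by rewrite cards1.
  have -> : [set P : {set {set T}} | partition P set0 & #|P| == m.+1] = set0.
    apply/setP => P; rewrite !inE PE.
    by case: (P =P set0) => [->|] //=; rewrite cards0.
  by rewrite cards0.
move=> cD; have [D0|[x xD]] := set_0Vmem D.
  by move: cD; rewrite D0 cards0.
case: m => [|m] /=.
  rewrite /Np; apply/eqP; rewrite cards_eq0; apply/eqP/setP => P; rewrite !inE cards_eq0.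
  apply/negbTE/andP => -[/and3P[/eqP cP _ _] /eqP P0].
  by move: xD; rewrite -cP P0 /cover big_set0 inE.
have cD' : #|D :\ x| = k by move: cD; rewrite (cardsD1 x) xD add1n => -[].
by rewrite (Np_rec xD) !IH.
Qed.

Lemma stirling2_St l m : stirling2 l m = St l m.
Proof. by rewrite /stirling2 -/(Np [set: 'I_l] m) (Np_St (k := l)) // cardsT card_ord. Qed.

Local Open Scope ring_scope.
Lemma StSS k m : St k.+1 m.+1 = (St k m + m.+1 * St k m.+1)%N. Proof. by []. Qed.
Lemma StS0 k : St k.+1 0 = 0%N. Proof. by []. Qed.
Lemma St00 : St 0 0 = 1%N. Proof. by []. Qed.
Lemma St0S m : St 0 m.+1 = 0%N. Proof. by []. Qed.

Lemma St_gt k m : (k < m)%N -> St k m = 0%N.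
Proof.
elim: k m => [|k IH] [|m] //= km.
by rewrite !IH ?muln0 // ltnW.
Qed.

Lemma St_diag k : St k k = 1%N.
Proof. by elim: k => [|k IH] //=; rewrite IH St_gt ?muln0. Qed.

Arguments St : simpl never.

Section Alg.
Variable C : numClosedFieldType.

Lemma poly_eval0 (p : {poly C}) : (forall z, p.[z] = 0) -> p = 0.
Proof.
move=> H; apply/eqP; apply: contraT => p0.
have := max_poly_roots p0 (rs := [seq i%:R | i <- iota 0 (size p)]).
rewrite size_map size_iota ltnn; apply.
  by apply/allP => z /mapP[i _ ->]; apply/rootP.
rewrite map_inj_uniq ?iota_uniq // => i j /eqP; by rewrite eqr_nat => /eqP.
Qed.

Lemma St_id (n k : nat) :
  \sum_(l < k.+1) (-1) ^+ (k - l) * (St k.+1 l.+1)%:R * ((n + l) ^_ l)%:R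
  = (n%:R : C) ^+ k.
Proof.
elim: k => [|k IH].
  by rewrite big_ord1 /= expr0 !mul1r ffactn0.
rewrite exprS -IH.
transitivity (\sum_(l < k.+2) (-1 : C) ^+ (k.+1 - l) * (St k.+1 l)%:R * ((n + l) ^_ l)%:R
   + \sum_(l < k.+2) (-1 : C) ^+ (k.+1 - l) * (l.+1 * St k.+1 l.+1)%:R * ((n + l) ^_ l)%:R).
  by rewrite -big_split /=; apply: eq_bigr => l _; rewrite StSS natrD -mulrDl -mulrDr.
rewrite [X in X + _]big_ord_recl StS0 mulr0 mul0r add0r.
rewrite [X in _ + X]big_ord_recr /= (St_gt (ltnSn k.+1)) muln0 mulr0 mul0r addr0.
rewrite big_distrr -big_split /=; apply: eq_bigr => l _.
have lk : (l <= k)%N by rewrite -ltnS.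
rewrite /bump /= add1n addnS ffactSS subSS subSn // exprS.
rewrite !natrM natrD.
ring.
Qed.

Implicit Types A B : {poly C}.
Definition conv (A : {poly C}) (f : nat -> C) (n : nat) :=
  \sum_(k < n.+1) A`_k * f (n - k)%N.

Lemma conv_trunc A f n N : (n < N)%N -> conv A f n = (A * \poly_(i < N) f i)`_n.
Proof.
move=> nN; rewrite coefM; apply: eq_bigr => k _.
by rewrite coef_poly (leq_ltn_trans (leq_subr _ _) nN).
Qed.

Lemma conv_ext A f g n : (forall i, f i = g i) -> conv A f n = conv A g n.
Proof. by move=> fg; apply: eq_bigr => k _; rewrite fg. Qed.

Lemma conv_mul A B f n : conv (A * B) f n = conv A (conv B f) n.
Proof.
rewrite (conv_trunc _ _ (ltnSn n)) -mulrA coefM [RHS]/conv; apply: eq_bigr => k _.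
by rewrite (@conv_trunc B f _ n.+1) // ltnS leq_subr.
Qed.

Lemma conv_coef A B n : conv A (fun i => B`_i) n = (A * B)`_n.
Proof. by rewrite coefM. Qed.

Lemma conv_delta A n : conv A (fun i => (i == 0%N)%:R) n = A`_n.
Proof.
rewrite /conv big_ord_recr /= subnn eqxx mulr1 big1 ?add0r // => k _.
by rewrite /= subn_eq0 leqNgt ltn_ord mulr0.
Qed.

Lemma conv_sum (I : Type) (r : seq I) A (F : I -> nat -> C) n :
  conv A (fun i => \sum_(j <- r) F j i) n = \sum_(j <- r) conv A (F j) n.
Proof.
rewrite /conv (eq_bigr (fun k : 'I_n.+1 => \sum_(j <- r) A`_k * F j (n - k)%N)).
  by rewrite exchange_big.
by move=> k _; rewrite mulr_sumr.
Qed.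

Lemma conv_scale A c f n : conv A (fun i => c * f i) n = c * conv A f n.
Proof. by rewrite /conv mulr_sumr; apply: eq_bigr => k _; rewrite mulrCA. Qed.

Lemma conv_lin w f n :
  conv (w%:P - 'X) f n = if n is n'.+1 then w * f n - f n' else w * f 0%N.
Proof.
have c0 : (w%:P - 'X)`_0 = w by rewrite coefB coefC coefX subr0.
case: n => [|n]; rewrite /conv.
  by rewrite big_ord1 c0.
rewrite big_ord_recl big_ord_recl big1 ?addr0.
  by rewrite c0 /= coefB coefC coefX /= sub0r mulN1r subn1.
by move=> i _; rewrite /= coefB coefC coefX /= subr0 mul0r.
Qed.

Definition sr (w : C) (l n : nat) : C := ('C(n + l, l))%:R * w^-1 ^+ (n + l).+1.

Lemma wK (w x : C) : w != 0 -> w * (w^-1 * x) = x.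
Proof. by move=> w0; rewrite mulrA mulfV ?mul1r. Qed.

Lemma conv_sr0 w n : w != 0 -> conv (w%:P - 'X) (sr w 0) n = (n == 0%N)%:R.
Proof.
move=> w0; rewrite conv_lin /sr; case: n => [|n] /=.
  by rewrite bin0 mul1r addn0 expr1 mulfV.
by rewrite !bin0 !mul1r !addn0 exprS wK // subrr.
Qed.

Lemma conv_srS w l n : w != 0 -> conv (w%:P - 'X) (sr w l.+1) n = sr w l n.
Proof.
move=> w0; rewrite conv_lin /sr; case: n => [|n] /=.
  by rewrite !add0n !binn !mul1r exprS wK.
rewrite [(n.+1 + l.+1)%N]addnS addSn exprS mulrCA wK //.
by rewrite addnS binS natrD -mulrBl addrAC subrr add0r.
Qed.

Lemma conv_srX w l n : w != 0 ->
  conv ((w%:P - 'X) ^+ l.+1) (sr w l) n = (n == 0%N)%:R.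
Proof.
move=> w0; elim: l n => [|l IH] n; first by rewrite expr1 conv_sr0.
rewrite exprSr conv_mul -(IH n); apply: conv_ext => i.
exact: conv_srS.
Qed.

Lemma prim_exists (D : nat) : (0 < D)%N -> {z : C | D.-primitive_root z}.
Proof.
pose p : {poly C} := 'X^D - 1; have [rs Dp] := closed_field_poly_normal p.
move=> D_gt0; apply/sigW; rewrite (monicP _) ?monicXnsubC // scale1r in Dp.
have rn1: all D.-unity_root rs by apply/allP=> z; rewrite -root_prod_XsubC -Dp.
have sz_r: (D < (size rs).+1)%N.
  by rewrite -(size_prod_XsubC rs id) -Dp size_XnsubC.
have [|z] := hasP (has_prim_root D_gt0 rn1 _ sz_r); last by exists z.
by rewrite -separable_prod_XsubC -Dp separable_Xn_sub_1 // pnatr_eq0 -lt0n.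
Qed.

Lemma prim_neq0 (D : nat) (z : C) : D.-primitive_root z -> z != 0.
Proof.
move=> zp; apply/eqP => z0; have := prim_expr_order zp.
by rewrite z0 expr0n gtn_eqF ?(prim_order_gt0 zp) // => /eqP; rewrite eq_sym oner_eq0.
Qed.

Lemma orth (D : nat) (z : C) v n : D.-primitive_root z -> (v < D)%N ->
  \sum_(i < D) (z ^+ i) ^+ v * ((z ^+ i)^-1) ^+ n =
  if v == (n %% D)%N then D%:R else 0.
Proof.
move=> zp vD; have z0 := prim_neq0 zp.
have e : forall i : 'I_D, (z ^+ i) ^+ v * ((z ^+ i)^-1) ^+ n
                      = (z ^+ v * (z ^+ n)^-1) ^+ i.
  by move=> i; rewrite exprMn !exprVn -!exprM !(mulnC i).
rewrite (eq_bigr _ (fun i _ => e i)).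
case: ifP => [/eqP vn | vn].
  rewrite vn prim_expr_mod // mulfV ?expf_neq0 //.
  by rewrite (eq_bigr (fun _ => 1)) ?sumr_const ?card_ord // => i _; rewrite expr1n.
set x := z ^+ v * (z ^+ n)^-1.
have xD : x ^+ D = 1.
  rewrite /x exprMn -exprVn -!exprM mulnC [(n * D)%N]mulnC !exprM.
  by rewrite exprVn !(prim_expr_order zp) invr1 !expr1n mulr1.
have x1 : x - 1 != 0.
  rewrite subr_eq0; apply/negP => /eqP x1; move: x1; rewrite /x.
  move/(congr1 (fun y => y * z ^+ n)); rewrite -mulrA mulVf ?expf_neq0 // mulr1 mul1r.
  move/eqP; rewrite (eq_prim_root_expr zp) modn_small // => /eqP vn'.
  by move: vn; rewrite vn' eqxx.
have := subrX1 x D; rewrite xD subrr => /esym/eqP; rewrite mulf_eq0 (negbTE x1) /=.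
by move/eqP.
Qed.

Definition hp (w : C) (D : nat) : {poly C} :=
  \sum_(i < D) (w%:P) ^+ (D.-1 - i) * 'X ^+ i.

Lemma hpE w D : w ^+ D = 1 -> (w%:P - 'X) * hp w D = 1 - 'X^D.
Proof. by move=> wD; rewrite /hp -subrXX -polyC_exp wD. Qed.

Lemma hp_root w D : (0 < D)%N -> w ^+ D = 1 -> (hp w D).[w] != 0.
Proof.
move=> D0 wD; rewrite /hp horner_sum.
rewrite (eq_bigr (fun _ => w ^+ D.-1)); last first.
  move=> i _; rewrite hornerM hornerXn horner_exp hornerC -exprD subnK //.
  by rewrite -ltnS prednK.
rewrite sumr_const card_ord -mulr_natr mulf_neq0 ?pnatr_eq0 -?lt0n //.
apply: expf_neq0; apply/eqP => w0; move: wD; rewrite w0 expr0n gtn_eqF //.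
by move/eqP; rewrite eq_sym oner_eq0.
Qed.

Lemma tri_exchange (F : nat -> nat -> C) r :
  \sum_(l < r) \sum_(l.+1 <= j < r.+1) F l j = \sum_(k < r) \sum_(l < k.+1) F l k.+1.
Proof.
elim: r => [|r IH]; first by rewrite !big_ord0.
rewrite big_ord_recr [RHS]big_ord_recr /= -IH big_nat1 [in RHS]big_ord_recr /=.
rewrite addrA; congr (_ + _); rewrite -big_split /=; apply: eq_bigr => l _.
by rewrite big_nat_recr //= ltnS ltnW.
Qed.

Definition fa (D : nat) (d : nat -> nat -> C) (w : C) (l : nat) : C :=
  (D%:R)^-1 * \sum_(v < D) w ^+ v * d l.-1 v.

Definition cc (D r : nat) (d : nat -> nat -> C) (w : C) (m : nat) : C :=
  w ^+ m * ((m.-1)`!)%:R *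
    \sum_(m <= l < r.+1) (-1) ^+ (l - m) * (St l m)%:R * fa D d w l.

Lemma cc_inner D r d (w : C) n : w != 0 ->
  \sum_(l < r) cc D r d w l.+1 * sr w l n =
  \sum_(k < r) fa D d w k.+1 * w^-1 ^+ n * (n%:R) ^+ k.
Proof.
move=> w0.
rewrite (eq_bigr (fun l : 'I_r => \sum_(l.+1 <= j < r.+1) (w^-1 ^+ n * (-1) ^+ (j - l.+1)
   * (St j l.+1)%:R * ((n + l) ^_ l)%:R * fa D d w j))); last first.
  move=> l _; rewrite /cc /sr /=.
  have E1 : w ^+ l.+1 * w^-1 ^+ (n + l).+1 = w^-1 ^+ n.
    by rewrite -addnS exprD mulrCA [w^-1 ^+ l.+1]exprVn mulfV ?expf_neq0 // mulr1.
  have E2 : ((l`!)%:R * ('C(n + l, l))%:R : C) = ((n + l) ^_ l)%:R.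
    by rewrite -bin_ffact natrM mulrC.
  rewrite -E1 -E2.
  transitivity (w ^+ l.+1 * w^-1 ^+ (n + l).+1 * ((l`!)%:R * ('C(n + l, l))%:R) *
     \sum_(l.+1 <= i < r.+1) (-1) ^+ (i - l.+1) * (St i l.+1)%:R * fa D d w i).
    by ring.
  by rewrite mulr_sumr; apply: eq_bigr => j _; ring.
rewrite (tri_exchange (fun l j => w^-1 ^+ n * (-1) ^+ (j - l.+1)
   * (St j l.+1)%:R * ((n + l) ^_ l)%:R * fa D d w j)).
apply: eq_bigr => k _; rewrite -(St_id n k) !mulr_sumr; apply: eq_bigr => l _.
by rewrite subSS; ring.
Qed.

Lemma dmod D (d : nat -> nat -> C) k n : (forall k n, d k (n + D)%N = d k n) ->
  d k (n %% D)%N = d k n.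
Proof.
move=> dper; rewrite {2}(divn_eq n D); elim: (n %/ D)%N => [|q IH].
  by rewrite mul0n add0n.
by rewrite mulSnr addnAC dper.
Qed.

Lemma p_expand D r (d : nat -> nat -> C) (z : C) n : D.-primitive_root z ->
  (forall k n, d k (n + D)%N = d k n) ->
  \sum_(k < r) d k n * (n%:R) ^+ k =
  \sum_(i < D) \sum_(l < r) cc D r d (z ^+ i) l.+1 * sr (z ^+ i) l n.
Proof.
move=> zp dper; have z0 := prim_neq0 zp; have D0 := prim_order_gt0 zp.
rewrite (eq_bigr (fun i : 'I_D => \sum_(k < r) fa D d (z ^+ i) k.+1 * (z ^+ i)^-1 ^+ n
   * (n%:R) ^+ k)); last by move=> i _; rewrite cc_inner // expf_neq0.
rewrite exchange_big /=; apply: eq_bigr => k _.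
rewrite -mulr_suml; congr (_ * _).
rewrite /fa (eq_bigr (fun i : 'I_D => (D%:R)^-1 * \sum_(v < D) d k v *
   ((z ^+ i) ^+ v * ((z ^+ i)^-1) ^+ n))); last first.
  by move=> i _; rewrite /= -mulrA mulr_suml; congr (_ * _); apply: eq_bigr => v _; ring.
rewrite -mulr_sumr exchange_big /=.
rewrite (eq_bigr (fun v : 'I_D => d k v * (if nat_of_ord v == (n %% D)%N then D%:R else 0)));
  last by move=> v _; rewrite -mulr_sumr orth.
rewrite (bigD1 (Ordinal (ltn_pmod n D0))) //= eqxx big1 ?addr0.
  rewrite dmod // mulrCA mulVf ?mulr1 // pnatr_eq0 -lt0n //.
move=> v /negbTE vne; case: ifP => [/eqP vn|]; last by rewrite mulr0.
by move: vne; rewrite -val_eqE /= vn eqxx.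
Qed.

Lemma comp_exp (p q : {poly C}) k : (p ^+ k) \Po q = (p \Po q) ^+ k.
Proof.
elim: k => [|k IH]; first by rewrite !expr0 comp_polyC.
by rewrite !exprS comp_polyM IH.
Qed.

Lemma comp_sum (I : Type) (r : seq I) (P : pred I) (F : I -> {poly C}) (q : {poly C}) :
  (\sum_(i <- r | P i) F i) \Po q = \sum_(i <- r | P i) (F i \Po q).
Proof.
apply: (big_ind2 (fun x y => x \Po q = y)) => //; first by rewrite comp_poly0.
by move=> x1 x2 y1 y2 <- <-; rewrite comp_polyD.
Qed.

Lemma dvdp_big (I : Type) (r : seq I) (P : pred I) (F : I -> {poly C}) (q : {poly C}) :
  (forall i, P i -> q %| F i) -> q %| \sum_(i <- r | P i) F i.
Proof.
move=> H; apply: (big_ind (fun x => q %| x)); first by rewrite dvdp0.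
  by move=> x y; apply: dvdp_add.
exact: H.
Qed.

Lemma UL (S : seq C) (N : nat) (a : C -> nat -> C) (B : {poly C}) :
  uniq S -> B != 0 ->
  (forall x, B.[x] != 0 ->
     \sum_(u <- S) \sum_(l < N) a u l / (u - x) ^+ l.+1 = 0) ->
  forall u0 l, u0 \in S -> (l < N)%N -> a u0 l = 0.
Proof.
move=> uS B0 H u0 l0 u0S l0N.
pose lin (u : C) : {poly C} := u%:P - 'X.
have linE u x : (lin u).[x] = u - x by rewrite /lin hornerD hornerN hornerC hornerX.
have lin0 u : lin u != 0.
  apply/eqP => /(congr1 (fun p : {poly C} => p`_1)).
  by rewrite /lin coefB coefC coefX coef0 sub0r => /eqP; rewrite oppr_eq0 oner_eq0.
pose W := \prod_(u <- S) lin u ^+ N.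
pose U u := \prod_(v <- S | v != u) lin v ^+ N.
pose term u := \sum_(l < N) a u l *: (lin u ^+ (N - l.+1) * U u).
pose T := \sum_(u <- S) term u.
have W0 : W != 0 by rewrite prodf_seq_neq0; apply/allP => u _; rewrite expf_neq0.
have WU u : u \in S -> W = lin u ^+ N * U u by move=> uS'; rewrite /W (bigD1_seq u).
have T0 : T = 0.
  have : T * (B * W) = 0.
    apply: poly_eval0 => x; rewrite hornerM.
    have [BW0|BW0] := eqVneq (B * W).[x] 0; first by rewrite BW0 mulr0.
    move: BW0; rewrite hornerM mulf_eq0 negb_or => /andP[Bx Wx].
    suff -> : T.[x] = 0 by rewrite mul0r.
    have := H x Bx => /(congr1 (fun y => y * W.[x])); rewrite mul0r => <-.
    rewrite mulr_suml /T horner_sum; apply: eq_big_seq => u uS'.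
    rewrite mulr_suml /term horner_sum; apply: eq_bigr => l _.
    rewrite hornerZ hornerM horner_exp linE (WU u uS') hornerM horner_exp linE.
    have ux : u - x != 0.
      apply: contraNneq Wx => ux0.
      have N0 : (N == 0%N) = false by case: (N) l0N.
      by rewrite (WU u uS') hornerM horner_exp linE ux0 expr0n N0 mul0r.
    by rewrite expfB_cond; [ring | rewrite (negbTE ux) add0n].
  move/eqP; rewrite !mulf_eq0 (negbTE B0) (negbTE W0) !orbF => /eqP.
  done.
have Tdec := T0; rewrite /T (bigD1_seq u0) //= in Tdec.
have rest : lin u0 ^+ N %| \sum_(u <- S | u != u0) term u.
  apply: dvdp_big => u uu0; rewrite /term; apply: dvdp_big => l _.
  rewrite -mul_polyC; apply: dvdp_mull; apply: dvdp_mull.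
  rewrite /U big_mkcond (bigD1_seq u0) //= eq_sym uu0.
  exact: dvdp_mulr.
have dA : lin u0 ^+ N %| term u0.
  by move/eqP: Tdec; rewrite addr_eq0 => /eqP ->; rewrite dvdpNr.
pose A := \sum_(l < N) a u0 l *: lin u0 ^+ (N - l.+1).
have termE : term u0 = A * U u0.
  by rewrite /term /A mulr_suml; apply: eq_bigr => l _; rewrite scalerAl.
have cop : coprimep (lin u0 ^+ N) (U u0).
  apply: coprimep_expl.
  have -> : lin u0 = (-1) *: ('X - u0%:P) by rewrite /lin scaleN1r opprB.
  rewrite coprimepZl ?oppr_eq0 ?oner_eq0 // coprimep_sym coprimep_XsubC.
  rewrite /root /U horner_prod prodf_seq_neq0; apply/allP => v _; apply/implyP => vu0.
  by rewrite horner_exp linE expf_neq0 // subr_eq0.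
have dA' : lin u0 ^+ N %| A by rewrite -(Gauss_dvdpl _ cop) -termE.
have dC := dvdp_comp_poly (lin u0) dA'.
have ll : lin u0 \Po lin u0 = 'X.
  by rewrite /lin comp_polyB comp_polyC comp_polyX opprB addrC subrK.
have AE : A \Po lin u0 = \poly_(i < N) a u0 (N - i.+1)%N.
  rewrite /A comp_sum poly_def [RHS](reindex_inj rev_ord_inj) /=.
  apply: eq_bigr => i _; rewrite comp_polyZ comp_exp ll.
  have -> : (N - (N - i.+1).+1)%N = i by have := ltn_ord i; lia.
  by [].
rewrite comp_exp ll AE in dC.
have P0 : \poly_(i < N) a u0 (N - i.+1)%N = 0.
  apply/eqP; apply: contraT => Pn0.
  have := dvdp_leq Pn0 dC; rewrite size_polyXn.
  by rewrite ltnNge size_poly.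
have := congr1 (fun p : {poly C} => p`_(N - l0.+1)%N) P0.
rewrite coef_poly coef0 ifT; last by lia.
by have -> : (N - (N - l0.+1).+1)%N = l0 by lia.
Qed.

Lemma cc_top D r d (w : C) l : w != 0 -> (0 < l)%N -> (l <= r)%N ->
  (forall j, (l < j <= r)%N -> fa D d w j = 0) -> cc D r d w l = 0 -> fa D d w l = 0.
Proof.
move=> w0 l0 lr H; rewrite /cc big_ltn ?ltnS // subnn expr0 mul1r St_diag mul1r.
rewrite big_nat_cond big1 ?addr0; last first.
  by move=> j /andP[/andP[lj jr] _]; rewrite H ?mulr0 // lj -ltnS.
have nz : w ^+ l * ((l.-1)`!)%:R != 0.
  by rewrite mulf_neq0 ?expf_neq0 // pnatr_eq0 -lt0n fact_gt0.
by move/eqP; rewrite mulf_eq0 (negbTE nz) /= => /eqP.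
Qed.

Lemma top_zero D r d (w : C) u : w != 0 ->
  (forall l, (u < l <= r)%N -> cc D r d w l = 0) ->
  forall l, (u < l <= r)%N -> fa D d w l = 0.
Proof.
move=> w0 H.
suff K : forall k l, (r - l <= k)%N -> (u < l <= r)%N -> fa D d w l = 0.
  by move=> l; apply: (K (r - l)%N).
elim=> [|k IH] l rl /andP[ul lr].
  apply: (cc_top (r := r)) => //; first by case: (l) ul.
    by move=> j /andP[lj jr]; exfalso; lia.
  by apply: H; rewrite ul lr.
apply: (cc_top (r := r)) => //; first by case: (l) ul.
  move=> j /andP[lj jr]; apply: IH; first by lia.
  by rewrite jr andbT (leq_trans ul (ltnW lj)).
by apply: H; rewrite ul lr.
Qed.

Lemma sub_seq_sum (S s : seq C) (F : C -> C) : uniq S -> uniq s -> {subset s <= S} ->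
  \sum_(u <- S) (if u \in s then F u else 0) = \sum_(u <- s) F u.
Proof.
move=> uS us sS; rewrite -big_mkcond -big_filter; apply: perm_big.
apply: uniq_perm => //; first exact: filter_uniq.
move=> u; rewrite mem_filter; apply/andP/idP => [[]//|us']; split => //.
exact: sS.
Qed.
End Alg.

Lemma widen_if (C : numClosedFieldType) (n1 n2 : nat) (F : nat -> C) : (n1 <= n2)%N ->
  \sum_(l < n2) (if (l < n1)%N then F l else 0) = \sum_(l < n1) F l.
Proof. by move=> h; rewrite (big_ord_widen n2 F h) [RHS]big_mkcond. Qed.

Theorem proposition3p2
  (C : numClosedFieldType) (D r : nat) (d : nat -> nat -> C) (p : nat -> C)
  (L M : {poly C}) (s : seq C) (c : C -> nat -> C) (gamma : C)
  (m : nat) :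
  (0 < D)%N -> (0 < r)%N ->
  (* each d_k is periodic with period D *)
  (forall k n, d k (n + D)%N = d k n) ->
  (* d_{r-1} is not identically zero *)
  (exists n, d r.-1 n != 0) ->
  (* p is the quasi-polynomial *)
  (forall n, p n = \sum_(k < r) d k n * (n%:R) ^+ k) ->
  (* sum_n p(n) z^n = L/M as formal power series, i.e. M * P = L *)
  (forall n, \sum_(k < n.+1) M`_k * p (n - k)%N = L`_n) ->
  (* lowest terms *)
  coprimep L M ->
  (* s enumerates the distinct roots of M *)
  uniq s -> (forall x, root M x = (x \in s)) ->
  (* partial fraction decomposition *)
  (forall z, M.[z] != 0 ->
     L.[z] / M.[z] =
     \sum_(lam <- s) \sum_(1 <= l < (mup lam M).+1) c lam l / (lam - z) ^+ l) ->
  root M gamma ->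
  (1 <= m <= mup gamma M)%N ->
  c gamma m =
    gamma ^+ m * ((m.-1)`!)%:R *
    \sum_(m <= l < (mup gamma M).+1)
       (-1) ^+ (l - m) * (stirling2 l m)%:R *
       ((D%:R)^-1 * \sum_(v < D) gamma ^+ v * d l.-1 v).
Proof.
move=> D0 r0 dper _ pdef Hconv cop suniq sroots pfd groot /andP[m1 mmup].
have [z zp] := @prim_exists C D D0.
have z0 := prim_neq0 zp.
pose Q : {poly C} := (1 - 'X^D) ^+ r.
pose G (w : C) (l : nat) := (w%:P - 'X) ^+ (r - l.+1) * hp w D ^+ r.
have zD i : (z ^+ i) ^+ D = 1 by rewrite exprAC (prim_expr_order zp) expr1n.
have QG i l : (l < r)%N -> Q = G (z ^+ i) l * ((z ^+ i)%:P - 'X) ^+ l.+1.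
  by move=> lr; rewrite /G mulrAC -exprD subnK // -exprMn hpE ?zD.
pose P2 := \sum_(i < D) \sum_(l < r) cc D r d (z ^+ i) l.+1 *: G (z ^+ i) l.
have P2coef n : P2`_n = conv Q p n.
  rewrite (@conv_ext _ Q p (fun n => \sum_(i < D) \sum_(l < r)
      cc D r d (z ^+ i) l.+1 * sr (z ^+ i) l n)); last first.
    by move=> k; rewrite pdef (p_expand _ _ zp dper).
  rewrite conv_sum coef_sum; apply: eq_bigr => i _; rewrite conv_sum coef_sum.
  apply: eq_bigr => l _; rewrite conv_scale coefZ; congr (_ * _).
  rewrite (QG i l (ltn_ord l)) conv_mul.
  rewrite (@conv_ext _ _ _ (fun n => (n == 0%N)%:R)); first by rewrite conv_delta.
  by move=> k; rewrite conv_srX // expf_neq0.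
have MP : M * P2 = L * Q.
  apply/polyP => n; rewrite -conv_coef (@conv_ext _ _ _ (conv Q p)); last first.
    by move=> k; rewrite P2coef.
  rewrite -conv_mul mulrC conv_mul (@conv_ext _ _ _ (fun k => L`_k)).
    by rewrite conv_coef mulrC.
  by move=> k; rewrite -Hconv.
have Q0 : Q != 0.
  rewrite expf_neq0 //; apply/eqP => /(congr1 (fun q : {poly C} => q.[0])).
  rewrite hornerD hornerN hornerC hornerXn expr0n gtn_eqF // subr0 horner0.
  by move/eqP; rewrite oner_eq0.
have M0 : M != 0.
  apply/eqP => M0.
  have L0 : L = 0.
    apply/polyP => n; rewrite -Hconv coef0 big1 // => k _; by rewrite M0 coef0 mul0r.
  by move: cop; rewrite M0 L0 /coprimep gcdp0 size_poly0.
have MQ : M %| Q.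
  have : M %| Q * L by rewrite mulrC -MP dvdp_mulr.
  by rewrite Gauss_dvdpl // coprimep_sym.
have rootsD u : u \in s -> u ^+ D = 1.
  move=> us; have : root Q u by apply: root_dvdp MQ _; rewrite sroots.
  rewrite /root horner_exp hornerD hornerN hornerC hornerXn expf_eq0 subr_eq0.
  by case/andP => _ /eqP <-.
have mupr u : u \in s -> (mup u M <= r)%N.
  move=> us; have uD := rootsD u us.
  have QE : Q = ('X - u%:P) ^+ r * ((-1) ^+ r * hp u D ^+ r).
    by rewrite /Q -(hpE uD) exprMn mulrA -[in RHS]exprMn mulrN1 opprB.
  have nr : ~~ root ((-1) ^+ r * hp u D ^+ r) u.
    rewrite /root hornerM !horner_exp hornerN hornerC mulf_neq0 ?expf_neq0 //.
      by rewrite oppr_eq0 oner_eq0.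
    exact: hp_root.
  have mQ : mup u Q = r by rewrite QE mupMl // mup_XsubCX eqxx.
  rewrite -mQ mup_geq //; apply: dvdp_trans MQ; rewrite -mup_geq //.
have PF x : (M * Q).[x] != 0 ->
   \sum_(u <- s) \sum_(1 <= l < (mup u M).+1) c u l / (u - x) ^+ l =
   \sum_(i < D) \sum_(l < r) cc D r d (z ^+ i) l.+1 / (z ^+ i - x) ^+ l.+1.
  rewrite hornerM mulf_eq0 negb_or => /andP[Mx Qx].
  rewrite -pfd //.
  have e : M.[x] * P2.[x] = L.[x] * Q.[x] by rewrite -!hornerM MP.
  transitivity (P2.[x] / Q.[x]).
    by apply/eqP; rewrite eqr_div // -e mulrC.
  rewrite /P2 horner_sum mulr_suml; apply: eq_bigr => i _.
  rewrite horner_sum mulr_suml; apply: eq_bigr => l _.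
  rewrite hornerZ -mulrA; congr (_ * _).
  have QGx : Q.[x] = (G (z ^+ i) l).[x] * (z ^+ i - x) ^+ l.+1.
    by rewrite {1}(QG i l (ltn_ord l)) hornerM horner_exp hornerD hornerN hornerC hornerX.
  have Gx : (G (z ^+ i) l).[x] != 0.
    by apply: contraNneq Qx => G0; rewrite QGx G0 mul0r.
  by rewrite QGx invfM mulrA mulfV ?mul1r.
pose R := [seq z ^+ i | i <- iota 0 D].
have Runiq : uniq R.
  rewrite map_inj_in_uniq ?iota_uniq // => i j; rewrite !mem_iota !add0n.
  move=> /andP[_ iD] /andP[_ jD] /eqP; rewrite (eq_prim_root_expr zp) !modn_small //.
  by move/eqP.
pose S := undup (s ++ R).
have Suniq : uniq S := undup_uniq _.
have sS : {subset s <= S} by move=> u us; rewrite mem_undup mem_cat us.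
have RS : {subset R <= S} by move=> u uR; rewrite mem_undup mem_cat uR orbT.
pose a (u : C) (l : nat) := (if u \in s then (if (l < mup u M)%N then c u l.+1 else 0) else 0)
   - (if u \in R then cc D r d u l.+1 else 0).
have Ha x : (M * Q).[x] != 0 -> \sum_(u <- S) \sum_(l < r) a u l / (u - x) ^+ l.+1 = 0.
  move=> Hx.
  transitivity (\sum_(u <- S) (if u \in s then \sum_(l < r)
      (if (l < mup u M)%N then c u l.+1 else 0) / (u - x) ^+ l.+1 else 0)
    - \sum_(u <- S) (if u \in R then \sum_(l < r) cc D r d u l.+1 / (u - x) ^+ l.+1 else 0)).
    have ifsum (b : bool) (F : 'I_r -> C) :
        (if b then \sum_(l < r) F l else 0) = \sum_(l < r) (if b then F l else 0).
      by case: b; rewrite // big1.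
    rewrite -sumrB; apply: eq_bigr => u _.
    rewrite (ifsum (u \in s)) (ifsum (u \in R)) -sumrB; apply: eq_bigr => l _.
    by rewrite /a mulrBl; case: (u \in s); case: (u \in R); rewrite ?mul0r.
  rewrite (sub_seq_sum _ Suniq suniq sS) (sub_seq_sum _ Suniq Runiq RS).
  apply/eqP; rewrite subr_eq0; apply/eqP.
  transitivity (\sum_(u <- s) \sum_(1 <= l < (mup u M).+1) c u l / (u - x) ^+ l).
    apply: eq_big_seq => u us.
    rewrite big_add1 /= big_mkord.
    transitivity (\sum_(l < r) (if (l < mup u M)%N then c u l.+1 / (u - x) ^+ l.+1 else 0)).
      by apply: eq_bigr => l _; case: ifP; rewrite ?mul0r.
    by rewrite (widen_if (fun l => c u l.+1 / (u - x) ^+ l.+1) (mupr u us)).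
  have io : iota 0 D = index_iota 0 D by rewrite /index_iota subn0.
  by rewrite PF // /R big_map io big_mkord.
have UL' := @UL C S r a (M * Q) Suniq (mulf_neq0 M0 Q0) Ha.
have gs : gamma \in s by rewrite -sroots.
have gD := rootsD gamma gs.
have [i0 gi] := prim_rootP zp gD.
have gR : gamma \in R by rewrite gi; apply: map_f; rewrite mem_iota add0n ltn_ord.
have g0 : gamma != 0.
  apply/eqP => g0; move: gD; rewrite g0 expr0n gtn_eqF // => /eqP.
  by rewrite eq_sym oner_eq0.
have mr := mupr gamma gs.
have Hg l : (l < r)%N ->
    (if (l < mup gamma M)%N then c gamma l.+1 else 0) = cc D r d gamma l.+1.
  move=> lr; apply/eqP; rewrite -subr_eq0; apply/eqP.
  by have := UL' gamma l (sS _ gs) lr; rewrite /a gs gR.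
have ccz : forall l, (mup gamma M < l <= r)%N -> cc D r d gamma l = 0.
  move=> l /andP[ml lr].
  have lr' : (l.-1 < r)%N by clear -ml lr; lia.
  have ifF : (l.-1 < mup gamma M)%N = false by clear -ml lr; lia.
  have l0 : (0 < l)%N by clear -ml lr; lia.
  by have := Hg _ lr'; rewrite ifF prednK // => <-.
have faz := top_zero g0 ccz.
have cm : c gamma m = cc D r d gamma m.
  have mr' : (m.-1 < r)%N by clear -m1 mmup mr; lia.
  have ifT' : (m.-1 < mup gamma M)%N = true by clear -m1 mmup mr; lia.
  by have := Hg _ mr'; rewrite ifT' prednK.
rewrite cm /cc; congr (_ * _).
rewrite (@big_cat_nat _ _ _ (mup gamma M).+1) /=; [|by clear -m1 mmup mr; lia|by clear -m1 mmup mr; lia].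
rewrite [X in _ + X]big_nat_cond [X in _ + X]big1 ?addr0.
  by apply: eq_bigr => l _; rewrite stirling2_St.
move=> l /andP[/andP[ml lr] _]; rewrite faz ?mulr0 //.
by rewrite ml -ltnS lr.
Qed.
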